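(* Let $\mathbb{F}_q$ be a finite field, let $K,N,f,d$ be positive integers with $N \ge (K-1)d+3f+1$, and let $G_\mathcal{L}\in\mathbb{F}_q^{K\times N}$ be the Lagrange generator matrix defined in the context, with $i$-th column $(G_\mathcal{L})_i$. Let $\mathbf{B}=(b_{k,k'})_{k,k'\in[K]}$ and $\mathbf{B}'=(b'_{k,k'})_{k,k'\in[K]}$ be $K\times K$ arrays whose entries lie in $\mathbb{F}_q^{Q\times R}$. Suppose the $N$ nodes, indexed by $[N]$, are partitioned into correct nodes and at most $f$ Byzantine nodes, and suppose there exist sets $\mathcal{I},\mathcal{J}\subseteq[N]$ with $|\mathcal{I}|=|\mathcal{J}|=N-f$ such that for every correct node $i\in\mathcal{I}$ and every correct node $j\in\mathcal{J}$, $$w_{i,j}:=(G_\mathcal{L})_i^\intercal\,\mathbf{B}\,(G_\mathcal{L})_j \;=\; (G_\mathcal{L})_j^\intercal\,(\mathbf{B}')^\intercal\,(G_\mathcal{L})_i=:u_{j,i}.$$ (This is exactly what a valid $(N-f,N)$-threshold signature on the quorum identifier of $\mathcal{I}$ certifies in the protocol.) Then $\mathbf{B}=\mathbf{B}'$.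
   Context: Fix mutually disjoint sets of distinct elements $\{\alpha_1,\ldots,\alpha_N\}$ and $\{\omega_1,\ldots,\omega_K\}$ of $\mathbb{F}_q$. For $k\in[K]$ let $\Phi_k(z)=\prod_{j\in[K],j\ne k}\frac{z-\omega_j}{\omega_k-\omega_j}$, and let $G_\mathcal{L}$ be the $K\times N$ matrix with $(k,i)$ entry $\Phi_k(\alpha_i)$. For a $K\times K$ array $\mathbf{M}=(m_{k,k'})$ with entries in the $\mathbb{F}_q$-vector space $\mathbb{F}_q^{Q\times R}$ and column vectors $x,y\in\mathbb{F}_q^K$, $x^\intercal \mathbf{M} y$ denotes $\sum_{k,k'}x_k m_{k,k'}y_{k'}\in\mathbb{F}_q^{Q\times R}$, and $\mathbf{M}^\intercal$ denotes the $K\times K$ array whose $(k,k')$ entry is $m_{k',k}$ (entries themselves are not transposed). In the paper, $\mathbf{B}$ is the block from which node $i$'s coded outgoing strip $(G_\mathcal{L})_i^\intercal\mathbf{B}$ is formed and $\mathbf{B}'$ the block from which its coded incoming strip $(G_\mathcal{L})_i^\intercal(\mathbf{B}')^\intercal$ is formed; $d\ge 1$ is the degree of the verification polynomial. *)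

(* Defs.v *)
From HB Require Import structures.
From mathcomp Require Import all_boot all_order all_algebra all_field.
Set Implicit Arguments. Unset Strict Implicit. Unset Printing Implicit Defensive.
Import GRing.Theory.
Local Open Scope ring_scope.

Definition Phi (F : fieldType) (K : nat) (omega : 'I_K -> F) (k : 'I_K) (z : F) : F :=
  \prod_(j < K | j != k) ((z - omega j) / (omega k - omega j)).

Definition GL (F : fieldType) (K N : nat) (omega : 'I_K -> F) (alpha : 'I_N -> F)
  : 'M[F]_(K, N) := \matrix_(k < K, i < N) Phi omega k (alpha i).

(* x^T M y for a K x K array M with entries in F^{Q x R}:
   \sum_{k,k'} x_k m_{k,k'} y_{k'}. *)
Definition bilin (F : fieldType) (K Q R : nat) (x : 'cV[F]_K)
  (M : 'M['M[F]_(Q, R)]_K) (y : 'cV[F]_K) : 'M[F]_(Q, R) :=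
  \sum_(k < K) \sum_(k' < K) ((x k 0 * y k' 0) *: M k k').

(* Main.v *)
Require Import Defs.
From HB Require Import structures.
From mathcomp Require Import all_boot all_order all_algebra all_field.
From mathcomp Require Import ring.
From mathcomp Require Import zify.
Local Open Scope ring_scope.
Import GRing.Theory.

Section Key.
Variables (F : fieldType) (K : nat) (omega : 'I_K -> F).
Hypothesis omega_inj : injective omega.

Definition PhiP (a : 'I_K) : {poly F} :=
  \prod_(j < K | j != a) (('X - (omega j)%:P) * ((omega a - omega j)^-1)%:P).

Lemma PhiP_horner a x : (PhiP a).[x] = Phi omega a x.
Proof.
rewrite /PhiP /Phi horner_prod; apply: eq_bigr => j _.
by rewrite hornerM hornerXsubC hornerC.
Qed.

Lemma size_PhiP a : (size (PhiP a) <= K)%N.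
Proof.
rewrite /PhiP; apply: leq_trans (size_poly_prod_leq _ _) _.
have H : (\sum_(j < K | j != a) size (('X - (omega j)%:P) * ((omega a - omega j)^-1)%:P)%R <= 2 * #|[pred j : 'I_K | j != a]|)%N.
  rewrite -sum1_card big_distrr /=; apply: leq_sum => j _.
  rewrite muln1; apply: leq_trans (size_polyMleq _ _) _.
  rewrite size_XsubC; have := size_polyC_leq1 ((omega a - omega j)^-1); move=> h; rewrite (leq_trans (leq_sub2r 1 (leq_add (leqnn 2) h))) //.
have Hc : #|(fun i : 'I_K => i != a)| = K.-1 by rewrite cardC1 card_ord.
have K0 : (0 < K)%N by apply: leq_ltn_trans (ltn_ord a).
have Hc' : #|[pred j : 'I_K | j != a]| = K.-1 by rewrite cardC1 card_ord.
rewrite Hc' in H; rewrite Hc.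
move: H; set s := \sum_(_ < _ | _) _ => H. lia.
Qed.

Lemma Phi_omega b a : Phi omega b (omega a) = (b == a)%:R.
Proof.
rewrite /Phi; case: eqP => [->|/eqP nba].
  rewrite big1 // => j ja; rewrite divff // subr_eq0.
  by apply/eqP => /omega_inj E; rewrite E eqxx in ja.
rewrite (bigD1 a) /=; last by rewrite eq_sym.
by rewrite subrr mul0r mul0r.
Qed.

Lemma key (c : 'I_K -> F) (S : seq F) :
  uniq S -> (K <= size S)%N ->
  (forall x, x \in S -> \sum_(a < K) c a * Phi omega a x = 0) ->
  forall a, c a = 0.
Proof.
move=> uS hS hx.
pose p := \sum_(a < K) c a *: PhiP a.
have pE x : p.[x] = \sum_(a < K) c a * Phi omega a x.
  rewrite /p horner_sum; apply: eq_bigr => a _.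
  by rewrite hornerZ PhiP_horner.
have p0 : p = 0.
  apply/eqP; apply: contraT => pn0.
  have := max_poly_roots pn0 _ uS.
  have -> : all (root p) S by apply/allP => x xS; rewrite /root pE hx.
  move=> /(_ isT) H.
  have : (size p <= K)%N.
    rewrite /p; apply: (big_ind (fun q : {poly F} => size q <= K)%N).
    - by rewrite size_poly0.
    - move=> q1 q2 h1 h2; apply: leq_trans (size_polyD _ _) _; rewrite geq_max h1 h2 //.
    - move=> a _; apply: leq_trans (size_scale_leq _ _) _; exact: size_PhiP.
  move=> h2; by have := leq_trans (leq_ltn_trans hS H) h2; rewrite ltnn.
move=> a.
have := pE (omega a); rewrite p0 horner0 (bigD1 a) //= Phi_omega eqxx mulr1.
rewrite big1 ?addr0 // => b ba; rewrite Phi_omega (negbTE ba) mulr0 //.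
Qed.
End Key.

Theorem lemma1 (F : finFieldType) (K N f d Q R : nat)
  (alpha : 'I_N -> F) (omega : 'I_K -> F)
  (alpha_inj : injective alpha) (omega_inj : injective omega)
  (disj : forall (i : 'I_N) (k : 'I_K), alpha i != omega k)
  (hK : (0 < K)%N) (hN : (0 < N)%N) (hf : (0 < f)%N) (hd : (0 < d)%N)
  (hNbound : ((K - 1) * d + 3 * f + 1 <= N)%N)
  (B B' : 'M['M[F]_(Q, R)]_K)
  (Byz : {set 'I_N}) (hByz : (#|Byz| <= f)%N)
  (I J : {set 'I_N}) (hI : #|I| = (N - f)%N) (hJ : #|J| = (N - f)%N)
  (hw : forall i j : 'I_N, i \in I -> i \notin Byz -> j \in J -> j \notin Byz ->
      bilin (col i (GL omega alpha)) B (col j (GL omega alpha))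
      = bilin (col j (GL omega alpha)) B'^T (col i (GL omega alpha))) :
  B = B'.
Proof.
set G := GL omega alpha.
have GE k i : G k i = Phi omega k (alpha i) by rewrite mxE.
set S := I :\: Byz. set T := J :\: Byz.
have cardS : forall A : {set 'I_N}, #|A| = (N - f)%N -> (K <= #|A :\: Byz|)%N.
  move=> A hA; rewrite cardsD hA.
  have h1 : (#|A :&: Byz| <= #|Byz|)%N by apply: subset_leq_card; apply: subsetIr.
  have h2 : (K - 1 <= (K - 1) * d)%N by rewrite leq_pmulr.
  lia.
have inS : forall (A : {set 'I_N}) i, i \in A :\: Byz -> (i \in A) && (i \notin Byz).
  by move=> A i; rewrite inE andbC.
have uniqA : forall A : {set 'I_N}, uniq (map alpha (enum A)).
  by move=> A; rewrite map_inj_uniq ?enum_uniq.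
have sizeA : forall A : {set 'I_N}, size (map alpha (enum A)) = #|A|.
  by move=> A; rewrite size_map -cardE.
apply/matrixP => a b; apply/matrixP => q r.
apply/eqP; rewrite -subr_eq0; apply/eqP.
move: a b.
pose D a b := B a b q r - B' a b q r.
have H1 : forall i j, i \in S -> j \in T ->
   \sum_(a < K) \sum_(b < K) Phi omega a (alpha i) * Phi omega b (alpha j) * D a b = 0.
  move=> i j /inS /andP [iI iB] /inS /andP [jJ jB].
  have := congr1 (fun M : 'M[F]_(Q, R) => M q r) (hw i j iI iB jJ jB).
  have bE x M y : bilin x M y q r = \sum_(k < K) \sum_(k' < K) x k 0 * y k' 0 * M k k' q r.
    rewrite /bilin summxE; apply: eq_bigr => k _; rewrite summxE; apply: eq_bigr => k' _.
    by rewrite mxE.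
  rewrite !bE => E.
  have L : \sum_(a < K) \sum_(b < K) Phi omega a (alpha i) * Phi omega b (alpha j) * B a b q r
     = \sum_(k < K) \sum_(k' < K) col i G k 0 * col j G k' 0 * B k k' q r.
    by apply: eq_bigr => a _; apply: eq_bigr => b _; rewrite !mxE.
  have Rr : \sum_(a < K) \sum_(b < K) Phi omega a (alpha i) * Phi omega b (alpha j) * B' a b q r
     = \sum_(k < K) \sum_(k' < K) col j G k 0 * col i G k' 0 * B'^T k k' q r.
    rewrite exchange_big /=.
    apply: eq_bigr => a _; apply: eq_bigr => b _; rewrite !mxE. by rewrite [_ * Phi _ _ _]mulrC.
  have -> : \sum_(a < K) \sum_(b < K) Phi omega a (alpha i) * Phi omega b (alpha j) * D a b
     = \sum_(a < K) \sum_(b < K) Phi omega a (alpha i) * Phi omega b (alpha j) * B a b q r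
     - \sum_(a < K) \sum_(b < K) Phi omega a (alpha i) * Phi omega b (alpha j) * B' a b q r.
    rewrite -sumrB; apply: eq_bigr => a _; rewrite -sumrB; apply: eq_bigr => b _.
    by rewrite /D mulrBr.
  by rewrite L Rr E subrr.
have C : forall j, j \in T -> forall a, \sum_(b < K) Phi omega b (alpha j) * D a b = 0.
  move=> j jT.
  apply: (@key F K omega omega_inj _ (map alpha (enum S))); first exact: uniqA.
    by rewrite sizeA; apply: cardS.
  move=> x /mapP [i iS ->]; rewrite mem_enum in iS.
  rewrite -[RHS](H1 i j iS jT); apply: eq_bigr => a _; rewrite mulr_suml.
  by apply: eq_bigr => b _; rewrite mulrC mulrA.
move=> a b.
apply: (@key F K omega omega_inj (fun b => D a b) (map alpha (enum T))); first exact: uniqA.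
  by rewrite sizeA; apply: cardS.
move=> x /mapP [j jT ->]; rewrite mem_enum in jT.
rewrite -[RHS](C j jT a); apply: eq_bigr => b' _; exact: mulrC.
Qed.
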